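(* Let $(X,d)$ be a metric space, $K\subseteq X$ compact and let $\varepsilon>0$. Then \[ M_{\omega}(K,\varepsilon)\le M^{*}(K,\varepsilon)\le N^{*}(K,\varepsilon)\le N_{\omega}(K,\varepsilon). \]
   Context: $X$ carries the metric topology; $B(x,\varepsilon)=\{y\in X:d(x,y)\le\varepsilon\}$ and $\mathbbm{1}_A$ is the indicator of $A$. $\mathcal{D}_+(X)$ denotes the non-negative finite discrete measures on $X$ (finite sums $\sum_i\omega_i\delta_{x_i}$, $\omega_i\ge0$) and $\mathcal{B}_+(X)$ the non-negative Borel measures on $X$. Define $N_\omega(K,\varepsilon)=\inf\{\nu(X):\nu\in\mathcal{D}_+(X),\ \int\mathbbm{1}_{B(y,\varepsilon)}(x)\,d\nu(y)\ge\mathbbm{1}_K(x)\ \forall x\in X\}$; $N^{*}(K,\varepsilon)$ the same infimum over $\mu\in\mathcal{B}_+(X)$; $M_\omega(K,\varepsilon)=\sup\{\rho(K):\rho\in\mathcal{D}_+(X),\ \int\mathbbm{1}_{B(y,\varepsilon)}(x)\,d\rho(y)\le1\ \forall x\in X\}$; $M^{*}(K,\varepsilon)$ the same supremum over $\rho\in\mathcal{B}_+(X)$. *)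

(* Defs.v *)
From HB Require Import structures.
From mathcomp Require Import all_boot all_order all_algebra.
From mathcomp Require Import all_classical all_reals all_analysis.

Set Implicit Arguments.
Unset Strict Implicit.
Unset Printing Implicit Defensive.

Import Order.TTheory GRing.Theory Num.Theory.
Local Open Scope classical_set_scope.
Local Open Scope ring_scope.

Section Defs.
Variables (R : realType) (X : metricType R).

Definition cball (x : X) (e : R) : set X := [set y | mdist x y <= e].

(* nu = \sum_i w_i \delta_{x_i}, encoded as the list [:: (w_i, x_i)] *)
Definition dmeas := seq (R * X).
Definition dmeas_nonneg (nu : dmeas) : Prop := forall p, p \in nu -> 0 <= p.1.
Definition dmeas_of (nu : dmeas) (A : set X) : R :=
  \sum_(p <- nu) p.1 * \1_A p.2.
Definition dmeas_int_ball (nu : dmeas) (e : R) (x : X) : R :=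
  \sum_(p <- nu) p.1 * \1_(cball p.2 e) x.

Definition N_omega (K : set X) (e : R) : \bar R :=
  ereal_inf [set (dmeas_of nu setT)%:E | nu in
    [set nu : dmeas | dmeas_nonneg nu /\
       forall x : X, dmeas_int_ball nu e x >= \1_K x]].

Definition M_omega (K : set X) (e : R) : \bar R :=
  ereal_sup [set (dmeas_of rho K)%:E | rho in
    [set rho : dmeas | dmeas_nonneg rho /\
       forall x : X, dmeas_int_ball rho e x <= 1]].

(* MathComp-Analysis measurable types must be pointed; we equip a copy of X
   with a chosen point x0 (the sigma-algebra does not depend on it). *)
Definition ptX (x0 : X) : Type := X.
HB.instance Definition _ (x0 : X) := Choice.on (ptX x0).
HB.instance Definition _ (x0 : X) := isPointed.Build (ptX x0) x0.

Definition open_sets (x0 : X) : set (set (ptX x0)) := [set U | open (U : set X)].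

Definition borelX (x0 : X) := g_sigma_algebraType (@open_sets x0).

Definition Nstar_pt (x0 : X) (K : set X) (e : R) : \bar R :=
  ereal_inf [set mu setT | mu in
    [set mu : {measure set (borelX x0) -> \bar R} |
       forall x : X, (\int[mu]_y (\1_(cball y e) x : R)%:E >= (\1_K x)%:E)%E]].

Definition Mstar_pt (x0 : X) (K : set X) (e : R) : \bar R :=
  ereal_sup [set mu (K : set (borelX x0)) | mu in
    [set mu : {measure set (borelX x0) -> \bar R} |
       forall x : X, (\int[mu]_y (\1_(cball y e) x : R)%:E <= 1)%E]].

(* If X is empty the only Borel measure is the zero measure, whence
   N^*(K,e) = inf {0} = 0 and M^*(K,e) = sup {0} = 0. *)
Definition Nstar (K : set X) (e : R) : \bar R :=
  match pselect (exists x : X, True) with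
  | left h => Nstar_pt (projT1 (cid h)) K e
  | right _ => 0%E
  end.

Definition Mstar (K : set X) (e : R) : \bar R :=
  match pselect (exists x : X, True) with
  | left h => Mstar_pt (projT1 (cid h)) K e
  | right _ => 0%E
  end.

End Defs.

(* Main.v *)
Require Import Defs.
From HB Require Import structures.
From mathcomp Require Import all_boot all_order all_algebra.
From mathcomp Require Import all_classical all_reals all_analysis.
From mathcomp Require Import measurable_realfun finmap lra.

Local Open Scope classical_set_scope.
Local Open Scope ring_scope.

Set Implicit Arguments.
Unset Strict Implicit.
Unset Printing Implicit Defensive.
Import Order.TTheory GRing.Theory Num.Theory.

Section aux.
Variables (R : realType) (X : metricType R) (x0 : X).

Lemma open_meas (A : set X) : open A -> measurable (A : set (borelX x0)).
Proof. by move=> oA; apply: sub_sigma_algebra. Qed.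

Lemma oball_open (q : X) r : open [set y : X | mdist q y < r].
Proof.
rewrite openE => y /= qy; rewrite /interior.
apply/nbhs_ballP; exists (r - mdist q y); first by rewrite /= subr_gt0.
move=> z; rewrite ballEmdist /= => yz.
rewrite (le_lt_trans (metric_triangle q y z)) //.
by rewrite -ltrBrDl.
Qed.

Lemma lim_le (a b : R) : (forall n : nat, a < b + n.+1%:R^-1) -> a <= b.
Proof.
move=> h; apply/ler_addgt0Pr => r r0.
have [n hn] : exists n : nat, n.+1%:R^-1 < r.
  exists (Num.truncn r^-1).
  by rewrite invf_plt ?posrE ?ltr0n // truncnS_gt.
by rewrite ltW // (lt_le_trans (h n)) // lerD2l ltW.
Qed.
Lemma lim_le2 (a b : R) :
  (forall n : nat, a < b + (n.+1%:R^-1 + n.+1%:R^-1)) -> a <= b.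
Proof.
move=> h; apply/ler_addgt0Pr => r r0.
have r20 : 0 < r / 2 by rewrite divr_gt0.
have [n hn] : exists n : nat, n.+1%:R^-1 < r / 2.
  exists (Num.truncn (r / 2)^-1).
  by rewrite invf_plt ?posrE ?ltr0n // truncnS_gt.
rewrite ltW // (lt_le_trans (h n)) // lerD2l.
by rewrite [leRHS](splitr r) lerD // ltW.
Qed.

Lemma oball_meas (q : X) r : measurable ([set y | mdist q y < r] : set (borelX x0)).
Proof. by apply: open_meas; exact: oball_open. Qed.

Lemma cball_meas (q : X) r : measurable (cball q r : set (borelX x0)).
Proof.
have -> : cball q r = \bigcap_n [set y | mdist q y < r + n.+1%:R^-1].
  apply/seteqP; split => y /=.
    by move=> h n _ /=; rewrite (le_lt_trans h) // ltrDl.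
  by move=> h; apply: lim_le => n; exact: h.
by apply: bigcapT_measurable => n; exact: oball_meas.
Qed.

Lemma compact_meas (K : set X) : compact K -> measurable (K : set (borelX x0)).
Proof.
move=> cK; have := compact_closed (@metric_hausdorff R X) cK.
rewrite -openC => /open_meas/(@measurableC _ (borelX x0)).
by rewrite setCK.
Qed.
End aux.

Definition pX (R : realType) (X : metricType R) (k : X) : Type := X.
HB.instance Definition _ (R : realType) (X : metricType R) (k : X) :=
  Topological.on (pX k).
HB.instance Definition _ (R : realType) (X : metricType R) (k : X) :=
  isPointed.Build (pX k) k.

Lemma net (R : realType) (X : metricType R) (K : set X) r : compact K -> 0 < r ->
  exists F : {fset X}, ([set` F] `<=` K /\ K `<=` \bigcup_(q in [set` F]) [set y | mdist q y < r])%classic.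
Proof.
move=> cK r0; have [->|/set0P[k Kk]] := eqVneq K set0.
  by exists fset0; split => // x.
have cK' : @compact (pX k) K := cK.
rewrite compact_cover in cK'.
have op : forall q, K q -> open [set y : pX k | mdist q y < r].
  by move=> q _; exact: oball_open.
have cov : K `<=` cover K (fun q => [set y : pX k | mdist q y < r]).
  by move=> x Kx; exists x => //=; rewrite mdistxx.
have [D' DK KD] := cK' X K _ op cov.
exists D'; split => // q /= qD; have := DK q qD. exact: set_mem.
Qed.

Lemma indic_cball_sym (R : realType) (X : metricType R) (x y : X) e :
  \1_(cball y e) x = \1_(cball x e) y :> R.
Proof.
rewrite !indicE; congr ((_ : bool)%:R).
by apply/idP/idP => /set_mem h; apply/mem_set; rewrite /cball /= metric_sym.
Qed.

Section disc.
Local Open Scope ereal_scope.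
Variables (R : realType) (X : metricType R) (x0 : X) (nu : dmeas X).
Hypothesis hnu : dmeas_nonneg nu.

Definition dw k : {nonneg R} := NngNum (normr_ge0 (nth (0%R, x0) nu k).1).
Definition dmk (k : nat) : {measure set (borelX x0) -> \bar R} :=
  mscale (dw k) (@dirac _ (borelX x0) (nth (0%R, x0) nu k).2 R).
Definition dmu := msum dmk (size nu).

Lemma dmuE A : dmu A = (dmeas_of nu A)%:E.
Proof.
rewrite /dmu /msum /dmeas_of (big_nth (0%R, x0)) big_mkord -sumEFin.
apply: eq_bigr => i _; rewrite /dmk /mscale /= /dirac /=.
rewrite /mscale /= ger0_norm ?(hnu (mem_nth _ (ltn_ord i))) //.
Qed.

Lemma dmu_int x e : \int[dmu]_y (\1_(cball y e) x)%:E = (dmeas_int_ball nu e x)%:E.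
Proof.
under eq_integral do rewrite indic_cball_sym.
rewrite integral_indic ?setIT //; last exact: cball_meas.
transitivity (dmu (cball x e)) => //; rewrite dmuE.
rewrite /dmeas_of /dmeas_int_ball; congr (_%:E); apply: eq_bigr => p _; by rewrite indic_cball_sym.
Qed.
End disc.

Lemma S_meas (R : realType) (X : metricType R) (x0 : X) (K : set X) e :
  compact K ->
  measurable ([set z : borelX x0 * borelX x0 | K z.1 /\ mdist z.2 z.1 <= e]).
Proof.
move=> cK.
have nets n : exists F : {fset X}, ([set` F] `<=` K /\
    K `<=` \bigcup_(q in [set` F]) [set y | mdist q y < n.+1%:R^-1])%classic.
  by apply: net => //; rewrite invr_gt0 ltr0n.
have [Fn hFn] := choice nets.
have -> : [set z : borelX x0 * borelX x0 | K z.1 /\ mdist z.2 z.1 <= e] =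
  (K `*` setT) `&` \bigcap_n \bigcup_(q in [set` Fn n])
     ([set y | mdist q y < n.+1%:R^-1] `*` [set y | mdist q y < e + n.+1%:R^-1]).
  apply/seteqP; split.
  - move=> [x y] /= [Kx dxy]; split => // n _ /=.
    have [q qF qx] := (hFn n).2 x Kx.
    exists q => //; split => //=.
    rewrite /= in qx; rewrite (le_lt_trans (metric_triangle q x y)) // addrC.
    by apply: ler_ltD => //; rewrite metric_sym.
  - move=> [x y] /= [[Kx _] h]; split => //.
    apply: lim_le2 => n; have [q qF [/= qx qy]] := h n I.
    rewrite (le_lt_trans (metric_triangle y q x)) // metric_sym addrA.
    by apply: ltr_leD => //; apply: ltW.
apply: measurableI.
  by apply: measurableX; [exact: compact_meas|exact: measurableT].
apply: bigcapT_measurable => n; apply: fin_bigcup_measurable.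
  exact: finite_fset.
by move=> q _; apply: measurableX; exact: oball_meas.
Qed.

Section core.
Local Open Scope ereal_scope.
Variables (R : realType) (X : metricType R) (x0 : X) (K : set X) (e : R).
Hypothesis cK : compact K.
Hypothesis e0 : (0 < e)%R.
Variables mu nu : {measure set (borelX x0) -> \bar R}.
Hypothesis hmu : forall x : X, \int[mu]_y (\1_(cball y e) x)%:E <= 1.
Hypothesis hnu : forall x : X, (\1_K x)%:E <= \int[nu]_y (\1_(cball y e) x)%:E.
Hypothesis nufin : nu setT < +oo.

Lemma mu_cball q : mu (cball q e) <= 1.
Proof.
have := hmu q; under eq_integral do rewrite indic_cball_sym.
by rewrite integral_indic ?setIT //; exact: cball_meas.
Qed.

Lemma mu_union (s : seq X) :
  mu (\big[setU/set0]_(q <- s) cball q e) <= (size s)%:R%:E.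
Proof.
elim: s => [|q s IH]; first by rewrite big_nil measure0.
rewrite big_cons (le_trans (measureU2 _ _ _)) //.
- exact: cball_meas.
- by apply: bigsetU_measurable => i _; exact: cball_meas.
- by rewrite /= -natr1 addrC EFinD leeD // mu_cball.
Qed.

Lemma muK_lty : mu K < +oo.
Proof.
have [F [_ KF]] := net cK e0.
have mK : measurable (K : set (borelX x0)) := compact_meas cK.
have mU : measurable (\big[setU/set0]_(q <- F) cball q e : set (borelX x0)).
  by apply: bigsetU_measurable => i _; exact: cball_meas.
have sub : K `<=` \big[setU/set0]_(q <- F) cball q e.
  move=> x /KF [q qF qx]; rewrite -bigcup_seq; exists q => //.
  by rewrite /cball /= ltW.
have h := le_measure mu (mem_set mK) (mem_set mU) sub.
by rewrite (le_lt_trans h) // (le_lt_trans (mu_union _)) // ltry.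
Qed.

Let mK : measurable (K : set (borelX x0)) := compact_meas cK.
Definition muK := mrestr mu mK.
HB.instance Definition _ := Measure.on muK.

Lemma muK_fin : fin_num_fun muK.
Proof.
move=> A mA; rewrite ge0_fin_numE ?measure_ge0 //.
rewrite (le_lt_trans _ muK_lty) // /muK /mrestr.
by apply: le_measure; [exact/mem_set/measurableI|exact/mem_set|exact: subIsetr].
Qed.

HB.instance Definition _ := Measure_isFinite.Build _ _ _ muK muK_fin.

Definition nuF : set (borelX x0) -> \bar R := nu.
HB.instance Definition _ := Measure.on nuF.

Lemma nuF_fin : fin_num_fun nuF.
Proof.
move=> A mA; rewrite ge0_fin_numE ?measure_ge0 //.
rewrite (le_lt_trans _ nufin) //.
by apply: le_measure; [exact/mem_set|exact/mem_set/measurableT|].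
Qed.

HB.instance Definition _ := Measure_isFinite.Build _ _ _ nuF nuF_fin.


Lemma core_ineq : mu K <= nu setT.
Proof.
pose S := [set z : borelX x0 * borelX x0 | K z.1 /\ (mdist z.2 z.1 <= e)%R].
have mS : measurable S := S_meas (x0 := x0) e cK.
pose f := EFin \o (\1_S : _ -> R).
have mf : measurable_fun [set: borelX x0 * borelX x0] f.
  by apply/measurable_EFinP; exact: measurable_indic.
have f0 : forall z, 0 <= f z by move=> z; rewrite /f /= lee_fin indicE.
have step1 : mu K = \int[muK]_x (\1_K x)%:E.
  rewrite integral_indic // setIT; transitivity (muK K) => //; by rewrite /muK /mrestr setIid.
have step2 : \int[muK]_x (\1_K x)%:E <= \int[muK]_x \int[nuF]_y f (x, y).
  apply: ge0_le_integral => //.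
  - by apply/measurable_EFinP; exact: measurable_indic.
  - exact: (measurable_fun_fubini_tonelli_F f mf f0).
  - move=> x _; have [Kx|nKx] := pselect (K x).
      apply: (le_trans (hnu x)); rewrite le_eqVlt; apply/orP; left; apply/eqP.
      apply: eq_integral => y _ /=; rewrite !indicE; congr ((_ : bool)%:R%:E).
      apply/idP/idP => /set_mem h; apply/mem_set => //.
      by case: h.
    rewrite indicE memNset //; apply: integral_ge0 => y _; exact: f0.
have step3 := fubini_tonelli (m1 := muK) (m2 := nuF) f mf f0.
have step4 : \int[nuF]_y \int[muK]_x f (x, y) <= \int[nuF]_y (cst 1 y).
  apply: ge0_le_integral => //.
  - by move=> y _; apply: integral_ge0 => x _; exact: f0.
  - exact: (measurable_fun_fubini_tonelli_G f mf f0).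
  - move=> y _.
    have -> : \int[muK]_x f (x, y) = \int[muK]_x (\1_(K `&` cball y e) x)%:E by [].
    rewrite /cst.
    rewrite integral_indic //; last first.
      by apply: measurableI; [exact: mK|exact: cball_meas].
    rewrite /muK /mrestr setIT (le_trans _ (mu_cball y)) //.
    apply: le_measure; [apply/mem_set|apply/mem_set|].
    + by apply: measurableI => //; apply: measurableI => //; exact: cball_meas.
    + exact: cball_meas.
    + by move=> x [[]].
have step5 : \int[nuF]_y (cst 1 y) = nu setT.
  by rewrite integral_cst // mul1e.
by rewrite step1 (le_trans step2) // step3 -step5.
Qed.
End core.

Unset Implicit Arguments.
Set Strict Implicit.

Theorem theorem2p12 (R : realType) (X : metricType R) (K : set X) (e : R) :
  compact K -> 0 < e ->
  (M_omega K e <= Mstar K e <= Nstar K e)%E /\ (Nstar K e <= N_omega K e)%E.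
Proof.
move=> cK e0; rewrite /Mstar /Nstar; case: pselect => [h|hX].
- set x0 := projT1 (cid h).
  have p1 : (M_omega K e <= Mstar_pt x0 K e)%E.
    apply: ge_ereal_sup => _ [rho [hr hrb] <-].
    apply: le_ereal_sup_tmp; exists (dmu (x0:=x0) rho K); last by rewrite dmuE.
    exists (msum (dmk x0 rho) (size rho)) => // x.
    by rewrite dmu_int // lee_fin.
  have p2 : (Mstar_pt x0 K e <= Nstar_pt x0 K e)%E.
    apply: ge_ereal_sup => _ [mu hmu <-].
    apply: le_ereal_inf_tmp => _ [nu hnu <-].
    have [nuoo|nufin] := eqVneq (nu setT) +oo%E; first by rewrite nuoo leey.
    by apply: (core_ineq cK e0 hmu hnu); rewrite ltey.
  have p3 : (Nstar_pt x0 K e <= N_omega K e)%E.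
    apply: le_ereal_inf_tmp => _ [nu [hn hnb] <-].
    apply: ge_ereal_inf; exists (dmu (x0:=x0) nu setT); last by rewrite dmuE.
    exists (msum (dmk x0 nu) (size nu)) => // x.
    by rewrite dmu_int // lee_fin.
  by split => //; apply/andP; split.
- have nil_of (s : dmeas X) : s = [::].
    by case: s => // p s; exfalso; apply: hX; exists p.2.
  split; last first.
    apply: le_ereal_inf_tmp => _ [nu _ <-].
    by rewrite (nil_of nu) /dmeas_of big_nil.
  rewrite lexx andbT.
  apply: ge_ereal_sup => _ [rho _ <-].
  by rewrite (nil_of rho) /dmeas_of big_nil.
Qed.
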